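(* In the setting of the context (no depth assumption), for every $n\geq1$ the following hold: (i) $M_{n-1}$ is a free right $M_{n-2}$-module with a basis contained in $C_{M_{n-1}}(N)$ if and only if there exist orthogonal dual bases for $E_{M_{n-2}}$ contained in $C_{M_{n-1}}(N)$; (ii) $M_n$ is a free right $M_{n-1}$-module with a basis contained in $C_{M_n}(M)$ if and only if there exist orthogonal dual bases for $E_{M_{n-1}}$ contained in $C_{M_n}(M)$.
   Context: $k$ is a field; $C_R(S)=\{r\in R:rs=sr\ \forall s\in S\}$. $N\subseteq M$ is a strongly separable, irreducible extension of $k$-algebras: $C_M(N)=k1$ and there are an $N$-bimodule map $E:M\to N$ and $x_1,\dots,x_n,y_1,\dots,y_n\in M$ with $\sum_iE(mx_i)y_i=m=\sum_ix_iE(y_im)$ for all $m\in M$, $E(1)\neq0$, $\sum_ix_iy_i\neq0$; normalized so that $E(1)=1$, whence $\sum_ix_iy_i=\lambda^{-1}1$ with $0\neq\lambda\in k$. Basic construction: given $S\subseteq R$, an $S$-bimodule map $E_S:R\to S$ with $E_S(1)=1$ and $r_i,s_i\in R$ with $\sum_iE_S(rr_i)s_i=r=\sum_ir_iE_S(s_ir)$ and $\sum_ir_is_i=\lambda^{-1}1$, set $R_1=R\otimes_SR$ with product $(a\otimes b)(c\otimes d)=aE_S(bc)\otimes d$, unit $\sum_ir_i\otimes s_i$, $R\subseteq R_1$ via $r\mapsto\sum_irr_i\otimes s_i$, and $E_R:R_1\to R$, $a\otimes b\mapsto\lambda ab$; then $E_R$ with $\lambda^{-1}r_i\otimes1$,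 $1\otimes s_i$ satisfy the same conditions with the same $\lambda$. Jones tower: $M_{-1}=N$, $M_0=M$, $E_{M_{-1}}=E$, and inductively $M_n$ with $E_{M_{n-1}}:M_n\to M_{n-1}$ is the basic construction of $(M_{n-2}\subseteq M_{n-1},E_{M_{n-2}})$. For an $S$-bimodule map $G:R\to S$, orthogonal dual bases for $G$ are finite families $\{z_i\},\{w_i\}$ in $R$ with $G(w_iz_j)=\delta_{ij}$ and $\sum_iz_iG(w_ix)=x=\sum_iG(xz_i)w_i$ for all $x\in R$. *)

(* Defs.v *)
From HB Require Import structures.
From mathcomp Require Import all_boot all_order all_algebra.
Set Implicit Arguments. Unset Strict Implicit. Unset Printing Implicit Defensive.
Import GRing.Theory.
Local Open Scope ring_scope.

(* All algebras are (nontrivial, associative, unital) k-algebras, [algType k].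
   A subalgebra inclusion S ⊆ R is represented by an injective unital k-algebra
   morphism [iota : S -> R]. *)

Section Defs.
Variable k : fieldType.

Definition klinear (U V : lmodType k) (f : U -> V) : Prop :=
  forall (c : k) (a b : U), f (c *: a + b) = c *: f a + f b.

Definition alg_mor (A B : algType k) (f : A -> B) : Prop :=
  klinear f /\ (forall a b, f (a * b) = f a * f b) /\ f 1 = 1.

Definition bimod_map (S R : algType k) (iota : S -> R) (G : R -> S) : Prop :=
  (forall a b, G (a + b) = G a + G b) /\
  (forall (s t : S) (r : R), G (iota s * r * iota t) = s * G r * t).

Definition centralizes (A R : algType k) (f : A -> R) (r : R) : Prop :=
  forall a : A, r * f a = f a * r.

Definition free_right_basis (S R : algType k) (iota : S -> R) (B : R -> Prop)
  : Prop :=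
  (forall x : R, exists (s : seq R) (c : R -> S),
      (forall b, b \in s -> B b) /\ x = \sum_(b <- s) b * iota (c b)) /\
  (forall (s : seq R) (c : R -> S), uniq s -> (forall b, b \in s -> B b) ->
      \sum_(b <- s) b * iota (c b) = 0 -> forall b, b \in s -> c b = 0).

Definition orth_dual_bases (S R : algType k) (iota : S -> R) (G : R -> S)
  (p : nat) (z w : 'I_p -> R) : Prop :=
  (forall i j : 'I_p, G (w i * z j) = (i == j)%:R) /\
  (forall x : R, \sum_(i < p) z i * iota (G (w i * x)) = x /\
                 \sum_(i < p) iota (G (x * z i)) * w i = x).

(* [beta : R -> R -> R1] is the tensor product R ⊗_S R (a ⊗ b = beta a b):
   k-bilinear, S-balanced and universal among such maps into k-modules. *)
Definition bilin_balanced (S R : algType k) (iota : S -> R) (V : lmodType k)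
  (f : R -> R -> V) : Prop :=
  (forall c a a' b, f (c *: a + a') b = c *: f a b + f a' b) /\
  (forall c a b b', f a (c *: b + b') = c *: f a b + f a b') /\
  (forall a (s : S) b, f (a * iota s) b = f a (iota s * b)).

Definition is_tensor (S R R1 : algType k) (iota : S -> R) (beta : R -> R -> R1)
  : Prop :=
  bilin_balanced iota beta /\
  forall (V : lmodType k) (f : R -> R -> V), bilin_balanced iota f ->
    exists g : R1 -> V, klinear g /\ (forall a b, g (beta a b) = f a b) /\
      forall g' : R1 -> V, klinear g' -> (forall a b, g' (beta a b) = f a b) ->
        forall t, g' t = g t.

(* Basic construction: given S ⊆ R (iotaS), E_S : R -> S, r_i, s_i (i < q)
   and lam, the algebra R1 with inclusion iotaR : R -> R1, expectation
   E_R : R1 -> R, realised as R1 = R ⊗_S R (pure tensors beta a b) with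
   (a⊗b)(c⊗d) = a E_S(bc) ⊗ d, 1 = sum r_i ⊗ s_i, r |-> sum r r_i ⊗ s_i,
   E_R(a ⊗ b) = lam a b. *)
Definition basic_construction (S R R1 : algType k) (iotaS : S -> R)
  (ES : R -> S) (q : nat) (r s : 'I_q -> R) (lam : k)
  (iotaR : R -> R1) (ER : R1 -> R) (beta : R -> R -> R1) : Prop :=
  [/\ is_tensor iotaS beta,
      forall a b c d, beta a b * beta c d = beta (a * iotaS (ES (b * c))) d,
      1 = \sum_(i < q) beta (r i) (s i),
      forall x, iotaR x = \sum_(i < q) beta (x * r i) (s i)
    & klinear ER /\ forall a b, ER (beta a b) = lam *: (a * b)].

(* Jones tower, shifted indexing: T j = M_{j-1}, so T 0 = N, T 1 = M,
   T (n+1) = M_n.  iota n : T n -> T n.+1 is the inclusion,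
   E n : T n.+1 -> T n is E_{M_{n-1}}, beta n : T n.+1 -> T n.+1 -> T n.+2
   the pure tensors of M_n = M_{n-1} ⊗_{M_{n-2}} M_{n-1}. *)
Variables (T : nat -> algType k) (beta : forall n, T n.+1 -> T n.+1 -> T n.+2)
  (q : nat) (x y : 'I_q -> T 1) (lam : k).

Fixpoint tower_qb (n : nat) : ('I_q -> T n.+1) * ('I_q -> T n.+1) :=
  match n return ('I_q -> T n.+1) * ('I_q -> T n.+1) with
  | 0 => (x, y)
  | n'.+1 => let rs := tower_qb n' in
      (fun i => lam^-1 *: @beta n' (rs.1 i) 1, fun i => @beta n' 1 (rs.2 i))
  end.

Variable iota : forall n, T n -> T n.+1.

Fixpoint upN (n : nat) : T 0 -> T n :=
  match n return T 0 -> T n with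
  | 0 => fun a => a
  | n'.+1 => fun a => @iota n' (upN n' a)
  end.

Fixpoint upM (n : nat) : T 1 -> T n.+1 :=
  match n return T 1 -> T n.+1 with
  | 0 => fun a => a
  | n'.+1 => fun a => @iota n'.+1 (upM n' a)
  end.

End Defs.

(* Main.v *)
Require Import Defs.
From HB Require Import structures.
From mathcomp Require Import all_boot all_order all_algebra.
From Stdlib Require Import IndefiniteDescription.
Import GRing.Theory.
Local Open Scope ring_scope.

Lemma choice_fun (I X : Type) (P : I -> X -> Prop) :
  (forall i, exists x, P i x) -> exists f : I -> X, forall i, P i (f i).
Proof.
move=> H; exists (fun i => proj1_sig (constructive_indefinite_description _ (H i))).
by move=> i; exact: (proj2_sig (constructive_indefinite_description _ (H i))).
Qed.

Lemma sum_count (V : zmodType) (T : eqType) (F l : seq T) (g : T -> V) :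
  uniq F -> {subset l <= F} ->
  \sum_(b <- l) g b = \sum_(b <- F) g b *+ count_mem b l.
Proof.
move=> uF; elim: l => [|a l IH] sub.
  by rewrite big_nil big1 // => b _; rewrite mulr0n.
rewrite big_cons IH; last by move=> b bl; apply: sub; rewrite inE bl orbT.
have aF : a \in F by apply: sub; rewrite inE eqxx.
rewrite [RHS](eq_bigr (fun b => g b *+ (a == b) + g b *+ count_mem b l)); last first.
  by move=> b _; rewrite /= mulrnDr.
rewrite big_split /=; congr (_ + _).
rewrite (bigD1_seq a) //= eqxx mulr1n big1 ?addr0 // => b.
by rewrite eq_sym => /negbTE ->; rewrite mulr0n.
Qed.

Section Gen.
Variables (k : fieldType) (S R : algType k) (io : S -> R) (G : R -> S)
  (q : nat) (r s : 'I_q -> R).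
Hypotheses (ioD : forall a b, io (a + b) = io a + io b)
  (ioM : forall a b, io (a * b) = io a * io b) (io1 : io 1 = 1)
  (GD : forall a b, G (a + b) = G a + G b)
  (GB : forall u v x, G (io u * x * io v) = u * G x * v)
  (D1 : forall x, \sum_(i < q) r i * io (G (s i * x)) = x)
  (D2 : forall x, \sum_(i < q) io (G (x * r i)) * s i = x).

Lemma io0 : io 0 = 0.
Proof. by apply: (addrI (io 0)); rewrite -ioD !addr0. Qed.
Lemma ioN a : io (- a) = - io a.
Proof. by apply: (addrI (io a)); rewrite -ioD !subrr io0. Qed.
Lemma ioB a b : io (a - b) = io a - io b.
Proof. by rewrite ioD ioN. Qed.
Lemma io_sum (I : Type) (l : seq I) (F : I -> S) :
  io (\sum_(i <- l) F i) = \sum_(i <- l) io (F i).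
Proof. exact: (big_morph io ioD io0). Qed.
Lemma ioMn a n : io (a *+ n) = io a *+ n.
Proof. by elim: n => [|n IH]; rewrite ?mulr0n ?io0 // !mulrS ioD IH. Qed.
Lemma G0 : G 0 = 0.
Proof. by apply: (addrI (G 0)); rewrite -GD !addr0. Qed.
Lemma GN a : G (- a) = - G a.
Proof. by apply: (addrI (G a)); rewrite -GD !subrr G0. Qed.
Lemma GBr a b : G (a - b) = G a - G b.
Proof. by rewrite GD GN. Qed.
Lemma G_sum (I : Type) (l : seq I) (F : I -> R) :
  G (\sum_(i <- l) F i) = \sum_(i <- l) G (F i).
Proof. exact: (big_morph G GD G0). Qed.
Lemma GL a x : G (io a * x) = a * G x.
Proof. by have := GB a 1 x; rewrite io1 !mulr1. Qed.
Lemma GR a x : G (x * io a) = G x * a.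
Proof. by have := GB 1 a x; rewrite io1 !mul1r. Qed.

Lemma nondeg v : (forall u, G (v * u) = 0) -> v = 0.
Proof.
move=> H; rewrite -(D2 v) big1 // => i _; by rewrite H io0 mul0r.
Qed.

Lemma Gext v v' : (forall u, G (v * u) = G (v' * u)) -> v = v'.
Proof.
move=> H; apply/eqP; rewrite -subr_eq0; apply/eqP/nondeg => u.
by rewrite mulrBl GBr H subrr.
Qed.

Lemma gen_equiv (A : algType k) (f : A -> S) :
  (exists B : R -> Prop, free_right_basis io B /\
     forall b, B b -> centralizes (fun a => io (f a)) b)
  <->
  (exists (p : nat) (z w : 'I_p -> R), orth_dual_bases io G z w /\
     forall i, centralizes (fun a => io (f a)) (z i) /\
               centralizes (fun a => io (f a)) (w i)).
Proof.
split; last first.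
  move=> [p [z [w [[Ho Hsp] Hc]]]].
  have zinj : injective z.
    move=> i j e; apply/eqP; have := Ho i j; rewrite -e Ho.
    rewrite eqxx; case: (i == j) => // /eqP; by rewrite oner_eq0.
  exists (fun b => exists i, b = z i); split; [split|].
  - move=> u; exists (map z (index_enum 'I_p)),
      (fun b => \sum_(i < p | z i == b) G (w i * u)); split.
      by move=> b /mapP [i _ ->]; exists i.
    rewrite big_map -{1}(Hsp u).1; apply: eq_bigr => i _; congr (_ * io _).
    by rewrite (big_pred1 i) // => j /=; rewrite (inj_eq zinj).
  - move=> l c ul Hl H0 b bl; have [j bj] := Hl b bl.
    have : G (w j * \sum_(b' <- l) b' * io (c b')) = 0 by rewrite H0 mulr0 G0.
    rewrite mulr_sumr G_sum.
    rewrite (eq_big_seq (fun b' => (b' == b)%:R * c b')); last first.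
      move=> b' /Hl [i ->]; rewrite mulrA GR Ho bj (inj_eq zinj) eq_sym //.
    rewrite (bigD1_seq b) //= eqxx mul1r big1 ?addr0 // => b' /negbTE ->.
    by rewrite mul0r.
  - by move=> b [i ->]; exact: (Hc i).1.
move=> [B [[Hspan Hind] Hc]].
have [LC HLC] : exists LC : 'I_q -> seq R * (R -> S), forall i,
   (forall b, b \in (LC i).1 -> B b) /\ r i = \sum_(b <- (LC i).1) b * io ((LC i).2 b).
  apply: (@choice_fun _ _ (fun i (lc : seq R * (R -> S)) =>
    (forall b, b \in lc.1 -> B b) /\ r i = \sum_(b <- lc.1) b * io (lc.2 b))) => i; have [l [c [h1 h2]]] := Hspan (r i).
  by exists (l, c).
pose L i := (LC i).1; pose C i := (LC i).2.
pose F := undup (flatten [seq L i | i <- index_enum 'I_q]).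
have uF : uniq F := undup_uniq _.
have LF i b : b \in L i -> b \in F.
  move=> bl; rewrite mem_undup; apply/flattenP; exists (L i) => //.
  by apply: map_f; rewrite mem_index_enum.
have FB b : b \in F -> B b.
  by rewrite mem_undup => /flattenP [l /mapP [i _ ->]] /(HLC i).1.
pose w b := \sum_(i < q) io ((count_mem b (L i))%:R * C i b) * s i.
have Gw b u : G (w b * u) =
    \sum_(i < q) (count_mem b (L i))%:R * C i b * G (s i * u).
  by rewrite mulr_suml G_sum; apply: eq_bigr => i _; rewrite -mulrA GL.
have expand u : \sum_(b <- F) b * io (G (w b * u)) = u.
  rewrite -{2}(D1 u).
  rewrite (eq_bigr (fun b => \sum_(i < q) b * io ((count_mem b (L i))%:R * C i b * G (s i * u)))); last first.
    by move=> b _; rewrite Gw io_sum mulr_sumr.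
  rewrite exchange_big /=; apply: eq_bigr => i _.
  rewrite [r i](HLC i).2 mulr_suml.
  rewrite [RHS](@sum_count _ _ F (LC i).1 _ uF); last by move=> b; apply: (LF i).
  apply: eq_bigr => b _.
  by rewrite -mulrA mulr_natl ioMn mulrnAr ioM mulrA.
have coord (c1 c2 : R -> S) :
    \sum_(b <- F) b * io (c1 b) = \sum_(b <- F) b * io (c2 b) ->
    forall b, b \in F -> c1 b = c2 b.
  move=> e b bF; apply/eqP; rewrite -subr_eq0; apply/eqP.
  apply: (Hind F (fun b => c1 b - c2 b) uF FB) => //.
  rewrite (eq_bigr (fun b => b * io (c1 b) - b * io (c2 b))); last first.
    by move=> b' _; rewrite ioB mulrBr.
  by rewrite sumrB e subrr.
have orth a b : a \in F -> b \in F -> G (w a * b) = (a == b)%:R.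
  move=> aF bF; apply: (coord (fun a => G (w a * b)) (fun a => (a == b)%:R)) => //.
  rewrite expand (bigD1_seq b) //= eqxx io1 mulr1 big1 ?addr0 // => a' /negbTE ->.
  by rewrite io0 mulr0.
have cent b : b \in F -> centralizes (fun a => io (f a)) (w b).
  move=> bF al.
  have st u : G (w b * (io (f al) * u)) = f al * G (w b * u).
    apply: (coord (fun b => G (w b * (io (f al) * u)))
                  (fun b => f al * G (w b * u))) => //.
    rewrite expand.
    rewrite big_seq (eq_bigr (fun b => io (f al) * (b * io (G (w b * u))))); last first.
      move=> b' b'F; rewrite ioM mulrA (Hc b' (FB b' b'F) al) mulrA //.
    by rewrite -big_seq -mulr_sumr expand.
  apply/eqP; rewrite -subr_eq0; apply/eqP/nondeg => u.
  by rewrite mulrBl GBr -!mulrA st GL subrr.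
exists (size F), (fun i => nth 0 F i), (fun i => w (nth 0 F i)).
have sumF (V : zmodType) (g : R -> V) :
    \sum_(b <- F) g b = \sum_(i < size F) g (nth 0 F i).
  by rewrite (big_nth 0) big_mkord.
split; [split|].
- move=> i j; rewrite orth ?mem_nth //.
  by rewrite nth_uniq.
- move=> u; split; first by rewrite -[RHS]expand sumF.
  apply: Gext => v.
  rewrite mulr_suml G_sum.
  rewrite -{2}(expand v) mulr_sumr G_sum sumF; apply: eq_bigr => i _.
  by rewrite -mulrA GL mulrA GR.
- move=> i; split; last by apply: cent; rewrite mem_nth.
  by apply: Hc; apply: FB; rewrite mem_nth.
Qed.

End Gen.

Set Implicit Arguments. Unset Strict Implicit.
Definition good (k : fieldType) (S R : algType k) (io : S -> R) (G : R -> S)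
  (q : nat) (r s : 'I_q -> R) : Prop :=
  [/\ (forall a b, io (a + b) = io a + io b),
      (forall a b, io (a * b) = io a * io b), io 1 = 1,
      (forall a b, G (a + b) = G a + G b)
    & (forall u v x, G (io u * x * io v) = u * G x * v)] /\
      (forall x, \sum_(i < q) r i * io (G (s i * x)) = x /\
                 \sum_(i < q) io (G (x * r i)) * s i = x).

Lemma tensor_ext (k : fieldType) (S R R1 : algType k) (iS : S -> R)
  (beta : R -> R -> R1) (V : lmodType k) (g1 g2 : R1 -> V) :
  is_tensor iS beta -> klinear g1 -> klinear g2 ->
  (forall a b, g1 (beta a b) = g2 (beta a b)) -> forall t, g1 t = g2 t.
Proof.
move=> [[b1 [b2 b3]] U] l1 l2 e t.
have bb : bilin_balanced iS (fun a b => g1 (beta a b)).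
  split; [|split].
  - by move=> c a a' b; rewrite b1 l1.
  - by move=> c a b b'; rewrite b2 l1.
  - by move=> a u b; rewrite b3.
have [g [_ [_ Hu]]] := U V _ bb.
rewrite (Hu g1 l1 (fun a b => erefl)) (Hu g2 l2) //.
Qed.

Lemma good_step (k : fieldType) (S R R1 : algType k) (iS : S -> R) (ES : R -> S)
  (q : nat) (r s : 'I_q -> R) (lam : k) (iR : R -> R1) (ER : R1 -> R)
  (beta : R -> R -> R1) :
  lam != 0 -> good iS ES r s ->
  basic_construction iS ES r s lam iR ER beta ->
  good iR ER (fun i => lam^-1 *: beta (r i) 1) (fun i => beta 1 (s i)).
Proof.
move=> lam0 [[iD iM i1 GD GB] DD] [Ht mulb one iRdef [ERl ERb]].
have [[b1 [b2 b3]] _] := Ht.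
have D1l a : \sum_(i < q) r i * iS (ES (s i * a)) = a := (DD a).1.
have D2l a : \sum_(i < q) iS (ES (a * r i)) * s i = a := (DD a).2.
have bD1 a a' b : beta (a + a') b = beta a b + beta a' b.
  by have := b1 1 a a' b; rewrite !scale1r.
have bD2 a b b' : beta a (b + b') = beta a b + beta a b'.
  by have := b2 1 a b b'; rewrite !scale1r.
have b01 b : beta 0 b = 0.
  by apply: (addrI (beta 0 b)); rewrite -bD1 !addr0.
have b02 a : beta a 0 = 0.
  by apply: (addrI (beta a 0)); rewrite -bD2 !addr0.
have bsum1 (F : 'I_q -> R) b : beta (\sum_(i < q) F i) b = \sum_(i < q) beta (F i) b.
  exact: (big_morph (fun a => beta a b) (fun a a' => bD1 a a' b) (b01 b)).
have bsum2 (F : 'I_q -> R) a : beta a (\sum_(i < q) F i) = \sum_(i < q) beta a (F i).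
  exact: (big_morph (fun b => beta a b) (fun b b' => bD2 a b b') (b02 a)).
have bZ1 c a b : beta (c *: a) b = c *: beta a b.
  by have := b1 c a 0 b; rewrite !addr0 b01 addr0.
have F1 x a b : iR x * beta a b = beta (x * a) b.
  rewrite iRdef mulr_suml (eq_bigr (fun i => beta (x * (r i * iS (ES (s i * a)))) b)).
    by rewrite -bsum1 -mulr_sumr D1l.
  by move=> i _; rewrite mulb mulrA.
have F2 x a b : beta a b * iR x = beta a (b * x).
  rewrite iRdef mulr_sumr (eq_bigr (fun i => beta a (iS (ES (b * x * r i)) * s i))).
    by rewrite -bsum2 D2l.
  by move=> i _; rewrite mulb mulrA b3.
have iRZ c x y : iR (c *: x + y) = c *: iR x + iR y.
  rewrite !iRdef scaler_sumr -big_split; apply: eq_bigr => i _.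
  by rewrite mulrDl -scalerAl b1.
have iRs c x : iR (c *: x) = c *: iR x.
  by rewrite !iRdef scaler_sumr; apply: eq_bigr => i _; rewrite -scalerAl bZ1.
have ER0 : ER 0 = 0.
  by apply: (addrI (ER 0)); have := ERl 1 0 0; rewrite !scale1r !addr0.
have ERs c t : ER (c *: t) = c *: ER t.
  by have := ERl c t 0; rewrite !addr0 ER0 addr0.
split; [split|].
- by move=> a b; have := iRZ 1 a b; rewrite !scale1r.
- move=> a b; rewrite [iR b]iRdef mulr_sumr iRdef; apply: eq_bigr => i _.
  by rewrite F1 mulrA.
- rewrite iRdef one; apply: eq_bigr => i _; by rewrite mul1r.
- by move=> a b; have := ERl 1 a b; rewrite !scale1r.
- move=> u v t.
  have := @tensor_ext _ _ _ _ iS beta R (fun t => ER (iR u * t * iR v))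
            (fun t => u * ER t * v) Ht.
  apply.
  + move=> c a b /=.
    by rewrite mulrDr mulrDl -scalerAr -scalerAl ERl.
  + move=> c a b /=.
    by rewrite ERl mulrDr mulrDl -scalerAr -scalerAl.
  + move=> a b /=.
    by rewrite F1 F2 !ERb -scalerAr -scalerAl !mulrA.
- move=> t; split.
  + have := @tensor_ext _ _ _ _ iS beta R1
       (fun t => \sum_(i < q) (lam^-1 *: beta (r i) 1) * iR (ER (beta 1 (s i) * t)))
       (fun t => t) Ht.
    apply => //.
    * move=> c a b /=.
      rewrite scaler_sumr -big_split; apply: eq_bigr => i _ /=.
      by rewrite mulrDr -scalerAr ERl iRZ mulrDr -scalerAr.
    * move=> a b /=.
      rewrite (eq_bigr (fun i => beta (r i * iS (ES (s i * a))) b)).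
        by rewrite -bsum1 D1l.
      move=> i _.
      rewrite mulb mul1r ERb iRs -scalerAl -scalerAr scalerA mulVf // scale1r.
      by rewrite F2 mul1r -b3.
  + have := @tensor_ext _ _ _ _ iS beta R1
       (fun t => \sum_(i < q) iR (ER (t * (lam^-1 *: beta (r i) 1))) * beta 1 (s i))
       (fun t => t) Ht.
    apply => //.
    * move=> c a b /=.
      rewrite scaler_sumr -big_split; apply: eq_bigr => i _ /=.
      by rewrite mulrDl -scalerAl ERl iRZ mulrDl -scalerAl.
    * move=> a b /=.
      rewrite (eq_bigr (fun i => beta a (iS (ES (b * r i)) * s i))).
        by rewrite -bsum2 D2l.
      move=> i _.
      rewrite -scalerAr mulb ERs ERb scalerA mulVf // scale1r mulr1.
      by rewrite F1 mulr1 b3.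
Qed.
Unset Implicit Arguments.

Theorem lemma3p1 (k : fieldType) (T : nat -> algType k)
  (iota : forall n, T n -> T n.+1) (E : forall n, T n.+1 -> T n)
  (beta : forall n, T n.+1 -> T n.+1 -> T n.+2)
  (q : nat) (x y : 'I_q -> T 1%N) (lam : k)
  (* N ⊆ M *)
  (Hiota0 : alg_mor (iota 0%N) /\ injective (iota 0%N))
  (* irreducible: C_M(N) = k1 *)
  (Hirr : forall m : T 1%N, centralizes (iota 0%N) m -> exists c : k, m = c%:A)
  (* strongly separable, normalized *)
  (HE : bimod_map (iota 0%N) (E 0%N))
  (HE1 : E 0%N 1 = 1)
  (Hqb : forall m : T 1%N,
     \sum_(i < q) iota 0%N (E 0%N (m * x i)) * y i = m /\
     m = \sum_(i < q) x i * iota 0%N (E 0%N (y i * m)))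
  (Hxy : \sum_(i < q) x i * y i != 0)
  (Hlam : lam != 0)
  (Hxylam : \sum_(i < q) x i * y i = lam^-1%:A)
  (* Jones tower *)
  (Htower : forall n, basic_construction (iota n) (E n)
              (tower_qb beta x y lam n).1 (tower_qb beta x y lam n).2 lam
              (iota n.+1) (E n.+1) (beta n)) :
  forall m : nat,
  (* n = m + 1 >= 1 :  M_{n-2} = T m, M_{n-1} = T m.+1, M_n = T m.+2 *)
  ((exists B : T m.+1 -> Prop, free_right_basis (iota m) B /\
        forall b, B b -> centralizes (upN iota m.+1) b)
   <->
   (exists (p : nat) (z w : 'I_p -> T m.+1),
        orth_dual_bases (iota m) (E m) z w /\
        forall i, centralizes (upN iota m.+1) (z i) /\
                  centralizes (upN iota m.+1) (w i)))
  /\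
  ((exists B : T m.+2 -> Prop, free_right_basis (iota m.+1) B /\
        forall b, B b -> centralizes (upM iota m.+1) b)
   <->
   (exists (p : nat) (z w : 'I_p -> T m.+2),
        orth_dual_bases (iota m.+1) (E m.+1) z w /\
        forall i, centralizes (upM iota m.+1) (z i) /\
                  centralizes (upM iota m.+1) (w i))).
Proof.
have base : good (iota 0%N) (E 0%N) x y.
  have [[kl [m1 o1]] _] := Hiota0.
  split; [split|].
  - by move=> a b; have := kl 1 a b; rewrite !scale1r.
  - exact: m1.
  - exact: o1.
  - exact: HE.1.
  - exact: HE.2.
  - by move=> u; split; [exact: (esym (Hqb u).2) | exact: (Hqb u).1].
have all : forall n, good (iota n) (E n) (tower_qb beta x y lam n).1
                          (tower_qb beta x y lam n).2.
  elim=> [|n IH]; first exact: base.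
  exact: (good_step Hlam IH (Htower n)).
move=> m; split.
- have [[iD iM i1 GD GB] DD] := all m.
  exact: (@gen_equiv _ _ _ _ _ _ _ _ iD iM i1 GD GB (fun x => (DD x).1)
            (fun x => (DD x).2) _ (upN iota m)).
- have [[iD iM i1 GD GB] DD] := all m.+1.
  exact: (@gen_equiv _ _ _ _ _ _ _ _ iD iM i1 GD GB (fun x => (DD x).1)
            (fun x => (DD x).2) _ (upM iota m)).
Qed.
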